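(* Let $(X,\mathfrak{M},m)$ be a $\sigma$-finite measure space and let $f:X\to[0,\infty)$ be a probability density function with respect to $m$. Then for every $\beta\ge 0$, $$P_f(\{x\in X: pv_f(x)\le \beta\})\le \beta \qquad\text{and}\qquad P_f(\{x\in X: pv_f(x)>\beta\})\ge 1-\beta .$$ Moreover, equality holds in both inequalities if and only if $\beta=\sup\{pv_f(x): x\in X,\ pv_f(x)\le\beta\}$ (with the convention $\sup\emptyset=0$).
   Context: $f$ is a measurable function $f:X\to[0,\infty)$ with $\int_X f\,dm=1$. For a measurable set $S\in\mathfrak{M}$, $P_f(S):=\int_S f\,dm$. The p-value of $x\in X$ with respect to $f$ is $$pv_f(x):=\int_{\{t\in X:\ f(t)\le f(x)\}} f\,dm = P_f(\{t: f(t)\le f(x)\})\in[0,1].$$ *)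

(* Defs.v *)
From HB Require Import structures.
From mathcomp Require Import all_boot all_order all_algebra.
From mathcomp Require Import all_classical all_reals all_analysis.
Set Implicit Arguments. Unset Strict Implicit. Unset Printing Implicit Defensive.
Import Order.TTheory GRing.Theory Num.Theory.
Local Open Scope classical_set_scope.
Local Open Scope ring_scope.

Definition Pf d (T : measurableType d) (R : realType)
  (mu : {measure set T -> \bar R}) (f : T -> R) (S : set T) : \bar R :=
  (\int[mu]_(x in S) (f x)%:E)%E.

(* pv_f(x) := P_f({t : f t <= f x}); this is in [0,1] for a density,
   so we take its real value with [fine]. *)
Definition pv d (T : measurableType d) (R : realType)
  (mu : {measure set T -> \bar R}) (f : T -> R) (x : T) : R :=
  fine (Pf mu f [set t | f t <= f x]).

(* Main.v *)
Require Import Defs.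
From HB Require Import structures.
From mathcomp Require Import all_boot all_order all_algebra.
From mathcomp Require Import all_classical all_reals all_analysis measurable_realfun.
From mathcomp Require Import lra.
Import Order.TTheory GRing.Theory Num.Theory.
Local Open Scope classical_set_scope.
Local Open Scope ring_scope.

Section S.
Context d (T : measurableType d) (R : realType)
  (mu : {measure set T -> \bar R}) (f : T -> R)
  (hfm : measurable_fun setT f) (hf0 : forall x, 0 <= f x)
  (hf1 : (\int[mu]_x (f x)%:E = 1)%E).

Let mfE : measurable_fun setT (fun x => (f x)%:E).
Proof. exact/(@measurable_EFinP _ _ _ setT f). Qed.

Lemma Pf_ge0 S : (0 <= Pf mu f S)%E.
Proof. by apply: integral_ge0 => x _; rewrite lee_fin. Qed.

Lemma Pf_le S1 S2 : measurable S1 -> measurable S2 -> S1 `<=` S2 ->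
  (Pf mu f S1 <= Pf mu f S2)%E.
Proof.
move=> m1 m2 s12; apply: ge0_subset_integral => //.
  exact: measurable_funTS.
by move=> x _; rewrite lee_fin.
Qed.

Lemma Pf_le1 S : measurable S -> (Pf mu f S <= 1)%E.
Proof. by move=> mS; rewrite -hf1; apply: Pf_le. Qed.

Lemma Pf_fin S : measurable S -> Pf mu f S \is a fin_num.
Proof.
move=> mS; apply: fin_real; apply/andP; split.
  by apply: (lt_le_trans _ (Pf_ge0 S)); rewrite ltNyr.
by apply: (le_lt_trans (Pf_le1 S mS)); rewrite ltry.
Qed.

Lemma Pf_compl S : measurable S -> (Pf mu f S + Pf mu f (~` S) = 1)%E.
Proof.
move=> mS; rewrite -hf1 /Pf -ge0_integral_setU //.
- by rewrite setUv.
- exact: measurableC.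
- by rewrite setUv.
- by move=> x _; rewrite lee_fin.
- by rewrite disj_set2E setICr.
Qed.

Definition Lset (c : R) := [set t | f t <= c].

Lemma mLset c : measurable (Lset c).
Proof.
have := hfm measurableT _ (measurable_itv `]-oo, c]); rewrite setTI.
by congr measurable; apply/seteqP; split => x /=; rewrite in_itv.
Qed.

Lemma pv_mono t x : f t <= f x -> pv mu f t <= pv mu f x.
Proof.
move=> tx; apply: fine_le; try apply: Pf_fin; try apply: mLset.
by apply: Pf_le; try apply: mLset; move=> u /= ?; apply: le_trans tx.
Qed.

Definition Pfm (_ : measurable_fun setT f) (_ : forall x, 0 <= f x) := Pf mu f.

Let nu := Pfm hfm hf0.
Let nu0 : nu set0 = 0%E. Proof. by rewrite /nu /Pfm /Pf integral_set0. Qed.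
Let nu_ge0 A : (0 <= nu A)%E. Proof. exact: Pf_ge0. Qed.
Let nu_ssa : semi_sigma_additive nu.
Proof. apply: semi_sigma_additive_nng_induced => // x; rewrite lee_fin. Qed.

HB.instance Definition _ := isMeasure.Build _ _ _ nu nu0 nu_ge0 nu_ssa.

Lemma cover_seq (A : set T) : A !=set0 ->
  exists x : nat -> T, (forall n, A (x n)) /\ (forall t, A t -> exists n, f t <= f (x n)).
Proof.
move=> [a0 Aa0].
have [[t0 [At0 mx]]|nomax] := pselect (exists t0, A t0 /\ forall t, A t -> f t <= f t0).
  by exists (fun=> t0); split => // t At; exists 0%N; exact: mx.
have nm : forall t, A t -> exists u, A u /\ f t < f u.
  move=> t At; apply: contrapT => nex; apply: nomax; exists t; split => // u Au.
  by rewrite leNgt; apply/negP => tu; apply: nex; exists u.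
have [ub|nub] := pselect (has_ubound (f @` A)).
  set c := sup (f @` A).
  have hs : has_sup (f @` A) by split => //; exists (f a0), a0.
  have /choice[x hx] : forall n : nat, exists x, A x /\ c - n.+1%:R^-1 < f x.
    move=> n.
    have hp : 0 < n.+1%:R^-1 :> R by rewrite invr_gt0 ltr0n.
    by have [e [x Ax <-] he] := sup_adherent hp hs; exists x.
  exists x; split=> [n|t At]; first by case: (hx n).
  have [u [Au tu]] := nm t At.
  have uc : f u <= c by apply: sup_upper_bound => //; exists u.
  have [k hk] := ltr_add_invr (lt_le_trans tu uc).
  exists k; have [_ h] := hx k; move: hk h; rewrite /c; set i := _^-1; set cc := sup _; lra.
have /choice[x hx] : forall n : nat, exists x, A x /\ n%:R < f x.
  move=> n; apply: contrapT => nex; apply: nub; exists n%:R => _ [x Ax <-].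
  by rewrite leNgt; apply/negP => h; apply: nex; exists x.
exists x; split=> [n|t At]; first by case: (hx n).
exists (Num.truncn (f t)).+1; have [_ h] := hx (Num.truncn (f t)).+1.
have := truncnS_gt (f t); lra.
Qed.

Fixpoint mkinc (x : nat -> T) n : T :=
  match n with
  | 0 => x 0%N
  | k.+1 => let y := mkinc x k in if f (x k.+1) <= f y then y else x k.+1
  end.

Lemma main_eq beta : let A := [set x | pv mu f x <= beta] in
  measurable A /\ Pf mu f A = (sup [set pv mu f x | x in A])%:E.
Proof.
move=> A.
have downA t x : A x -> f t <= f x -> A t.
  by move=> Ax tx; rewrite /A/=; apply: le_trans Ax; exact: pv_mono.
have [A0|An0] := pselect (A = set0).
  rewrite A0; split; first exact: measurable0.
  by rewrite image_set0 sup0 /Pf integral_set0.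
have [a0 Aa0] : A !=set0 by apply/set0P/eqP.
have [x [Ax cov]] := @cover_seq A (ex_intro _ a0 Aa0).
pose y := mkinc x.
have yA n : A (y n).
  rewrite /y; elim: n => [|n IH] /=; first exact: Ax.
  by case: ifP => _; [exact: IH | exact: Ax].
have xy n : f (x n) <= f (y n).
  rewrite /y; case: n => [|n] /=; first by [].
  by case: ifP => // /negbT; rewrite -ltNge => /ltW.
have ny n : f (y n) <= f (y n.+1).
  rewrite /y /=; case: ifP => // /negbT; rewrite -ltNge => /ltW //.
have AE : A = \bigcup_n Lset (f (y n)).
  apply/seteqP; split => t.
    by move=> /cov [n h]; exists n => //; rewrite /Lset /=; exact: le_trans h (xy n).
  by move=> [n _ h]; exact: downA (yA n) h.
have mA : measurable A by rewrite AE; apply: bigcupT_measurable => n; exact: mLset.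
have hs : has_sup [set pv mu f x | x in A].
  by split; [exists (pv mu f a0), a0 | exists beta => _ [z Az <-]].
have finA := Pf_fin _ mA.
split => //; apply/le_anti/andP; split; last first.
  rewrite -(fineK finA) lee_fin; apply: ge_sup => [|_ [t At <-]].
    by exists (pv mu f a0), a0.
  apply: fine_le; try exact: finA; first exact/Pf_fin/mLset.
  by apply: Pf_le => //; [exact: mLset | move=> u /= h; exact: downA At h].
have mF n : measurable (Lset (f (y n))) by exact: mLset.
have nd : nondecreasing_seq (fun n => Lset (f (y n))).
  apply/nondecreasing_seqP => n; apply/subsetPset => t /= h.
  exact: le_trans h (ny n).
have mU : measurable (\bigcup_n Lset (f (y n))) by rewrite -AE.
have h := nondecreasing_cvg_mu (mu := nu) mF mU nd.
rewrite -AE in h.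
change (Pf mu f A) with (nu A).
rewrite -(cvg_lim _ h) //; apply: lime_le; first by apply/cvg_ex; eexists; exact: h.
apply: nearW => n /=; rewrite /nu /Pfm -(fineK (Pf_fin _ (mF n))) lee_fin.
by apply: sup_upper_bound => //; exists (y n).
Qed.

End S.


Theorem lemma1 (d : measure_display) (T : measurableType d) (R : realType)
  (mu : {measure set T -> \bar R}) (f : T -> R)
  (hsf : sigma_finite setT mu)
  (hfm : measurable_fun setT f)
  (hf0 : forall x, 0 <= f x)
  (hf1 : (\int[mu]_x (f x)%:E = 1)%E)
  (beta : R) (hbeta : 0 <= beta) :
  (Pf mu f [set x | (pv mu f x <= beta)%R] <= beta%:E)%E /\
  ((1 - beta)%:E <= Pf mu f [set x | (beta < pv mu f x)%R])%E /\
  ((Pf mu f [set x | (pv mu f x <= beta)%R] = beta%:E /\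
    Pf mu f [set x | (beta < pv mu f x)%R] = (1 - beta)%:E) <->
   beta = sup [set pv mu f x | x in [set x | (pv mu f x <= beta)%R]]).
Proof.
have [mA PA] := main_eq _ _ _ mu f hfm hf0 hf1 beta.
set A := [set x | pv mu f x <= beta] in mA PA *.
set s := sup _ in PA *.
have CE : [set x | beta < pv mu f x] = ~` A.
  apply/seteqP; split => x /=; first by rewrite ltNge => /negP.
  by move=> /negP; rewrite -ltNge.
have mC : measurable (~` A) by exact: measurableC.
have fc := @Pf_fin _ _ _ mu f hfm hf0 hf1 _ mC.
have PC : Pf mu f (~` A) = (1 - s)%:E.
  move: (@Pf_compl _ _ _ mu f hfm hf0 hf1 _ mA); rewrite PA -(fineK fc) -EFinD => -[h].
  by rewrite -(fineK fc); congr EFin; lra.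
have sb : s <= beta.
  rewrite /s; have [ne|e] := pselect ([set pv mu f x | x in A] !=set0).
    by apply: ge_sup => // _ [z Az <-].
  have -> : [set pv mu f x | x in A] = set0.
    by apply/seteqP; split => // z hz; apply: e; exists z.
  by rewrite sup0.
rewrite CE PA PC; split; first by rewrite lee_fin.
split; first by rewrite lee_fin; lra.
split; first by move=> [[h] _].
by move=> hb; rewrite -hb.
Qed.
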